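(* Let $n\ge1$ and $t\ge1$ be integers, and let $\Gamma_{\le t}=\{a\subseteq[n]: 0<|a|\le t\}$. Let $M_t$ be the real matrix with rows and columns indexed by $\Gamma_{\le t}$ and entries $M_t[a,b]=2^{|a\cap b|}$. Then $M_t$ is positive definite. *)

(* Defs.v *)
From mathcomp Require Import all_boot all_order all_algebra.
From mathcomp Require Import reals.
Set Implicit Arguments. Unset Strict Implicit. Unset Printing Implicit Defensive.
Import Order.TTheory GRing.Theory Num.Theory.
Local Open Scope ring_scope.

Definition Gamma_le (n t : nat) : {pred {set 'I_n}} :=
  [pred a : {set 'I_n} | (0 < #|a|)%N && (#|a| <= t)%N].

Definition GammaT (n t : nat) : finType :=
  @sig {set 'I_n} (fun a => a \in @Gamma_le n t).

Definition Mt (R : realType) (n t : nat) : 'M[R]_#|{: GammaT n t}| :=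
  \matrix_(i, j) (2%:R ^+ #|val (enum_val i) :&: val (enum_val j)|).

Definition posdef (R : realType) (m : nat) (A : 'M[R]_m) : Prop :=
  A^T = A /\ forall x : 'cV[R]_m, x != 0 -> 0 < (x^T *m A *m x) ord0 ord0.

(* Main.v *)
Require Import Defs.
From mathcomp Require Import all_boot all_order all_algebra.
From mathcomp Require Import reals.
From mathcomp Require Import ring.
Import Order.TTheory GRing.Theory Num.Theory.
Local Open Scope ring_scope.

Lemma keyM (R : realType) (n t : nat) i j :
  Mt R n t i j = \sum_(c : {set 'I_n}) ((c \subset val (enum_val i))%:R * (c \subset val (enum_val j))%:R).
Proof.
rewrite mxE -natrX -card_powerset -sum1_card natr_sum.
rewrite big_mkcond /=; apply: eq_bigr => c _.
rewrite powersetE subsetI.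
by case: (c \subset _); case: (c \subset _); rewrite /= ?mulr1 ?mulr0.
Qed.

Lemma quad (R : realType) (n t : nat) (x : 'cV[R]_#|{: GammaT n t}|) :
  (x^T *m Mt R n t *m x) ord0 ord0 =
  \sum_(c : {set 'I_n}) (\sum_(i < #|{: GammaT n t}|) (c \subset val (enum_val i))%:R * x i ord0) ^+ 2.
Proof.
rewrite mxE.
under eq_bigr => j _ do rewrite mxE big_distrl /=.
under eq_bigr => j _ do under eq_bigr => i _ do rewrite mxE keyM big_distrr big_distrl /=.
under eq_bigr => j _ do rewrite exchange_big /=.
rewrite exchange_big /=.
under [RHS]eq_bigr => c _ do rewrite expr2 big_distrl /=.
apply: eq_bigr => c _.
apply: eq_bigr => j _; rewrite big_distrr /=; apply: eq_bigr => i _ /=.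
ring.
Qed.

From mathcomp Require Import lra.
Theorem lemma6 (R : realType) (n t : nat) (hn : (1 <= n)%N) (ht : (1 <= t)%N) :
  posdef (Mt R n t).
Proof.
split.
  by apply/matrixP => i j; rewrite !mxE setIC.
move=> x xn0.
have [i0 Hi0] : exists i, x i ord0 != 0.
  case: (pickP (fun i => x i ord0 != 0)) => [i0 Hi0 | H]; first by exists i0.
  case/negP: xn0; apply/eqP/matrixP => i j; rewrite (ord1 j) mxE.
  by move/negbFE: (H i) => /eqP.
case: (@arg_maxnP _ i0 (fun i => x i ord0 != 0) (fun i : 'I_#|{: GammaT n t}| => #|val (enum_val i)|) Hi0) => k Hk Hmax.
rewrite quad (bigD1 (val (enum_val k))) //=.
set y := \sum_(i < _) _.
have ->: y = x k ord0.
  rewrite /y (bigD1 k) //= subxx mul1r big1 ?addr0 // => i Hik.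
  case Hs: (_ \subset _); last by rewrite mul0r.
  case: (eqVneq (x i ord0) 0) => [->|Hxi]; first by rewrite mulr0.
  have := Hmax i Hxi => Hc.
  have /eqP Heq : val (enum_val k) == val (enum_val i) by by rewrite eqEcard Hs; exact: Hc.
  by move/val_inj/enum_val_inj: Heq => Heq; rewrite Heq eqxx in Hik.
have h1 : 0 < x k ord0 ^+ 2 by rewrite lt_neqAle sqr_ge0 andbT eq_sym sqrf_eq0.
have h2 : 0 <= \sum_(c | c != val (enum_val k)) (\sum_(i < #|{: GammaT n t}|) (c \subset val (enum_val i))%:R * x i ord0) ^+ 2.
  by apply: sumr_ge0 => c _; apply: sqr_ge0.
lra.
Qed.
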